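(* Let $G$ be the digraph with vertex set $\{v_1,\dots,v_7\}$ and arc set $\{(v_1,v_4),(v_1,v_2),(v_2,v_4),(v_2,v_3),(v_3,v_4),(v_4,v_6),(v_4,v_5),(v_5,v_6),(v_6,v_7),(v_4,v_7)\}$. Then $G$ is an esp-digraph and $\chi_o(G)=7$. In particular, the bound $\chi_o(G)\le 7$ for esp-digraphs is best possible.
   Context: An oriented graph is a digraph without loops and without pairs of opposite arcs. For a digraph $G=(V,E)$ (parallel arcs allowed; the definitions apply verbatim), an oriented $r$-vertex-coloring is a map $c:V\to\{1,\dots,r\}$ such that (i) $c(u)\ne c(v)$ for every arc $(u,v)\in E$, and (ii) $c(u)\ne c(y)$ for every two arcs $(u,v),(x,y)\in E$ with $c(v)=c(x)$. Equivalently, $c$ is a homomorphism to an oriented graph on $r$ vertices. The oriented chromatic number $\chi_o(G)$ is the smallest $r$ for which such a coloring exists. Edge series-parallel (multi)digraphs (esp-digraphs) are defined recursively, each with a distinguished source and sink: (i) a digraph with two distinct vertices $u,v$ and the single arc $(u,v)$ is an esp-digraph with source $u$ and sink $v$; (ii) if $G_1,G_2$ are vertex-disjoint esp-digraphs, then the parallel composition $G_1\cup G_2$ (identify the source of $G_1$ with the source of $G_2$ and the sink of $G_1$ with the sink of $G_2$; arcs are united, possibly creating parallel arcs) is an esp-digraph with these identified source and sink, and the series composition $G_1\times G_2$ (identify the sink of $G_1$ with the source of $G_2$) is an esp-digraph with source the source of $G_1$ and sink the sink of $G_2$. *)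

(* Defs.v *)
From mathcomp Require Import all_boot.
Set Implicit Arguments. Unset Strict Implicit. Unset Printing Implicit Defensive.

(* Digraphs: a finite vertex type V with an arc list (a multiset of arcs,
   parallel arcs allowed). *)

Definition oriented_coloring (V : finType) (E : seq (V * V)) (r : nat)
    (c : V -> 'I_r) : Prop :=
  (forall u v, (u, v) \in E -> c u != c v) /\
  (forall u v x y, (u, v) \in E -> (x, y) \in E -> c v = c x -> c u != c y).

Definition has_oriented_coloring (V : finType) (E : seq (V * V)) (r : nat) :=
  exists c : V -> 'I_r, oriented_coloring E c.

Definition oriented_chromatic_number_is (V : finType) (E : seq (V * V)) (k : nat) :=
  has_oriented_coloring E k /\ (forall r, has_oriented_coloring E r -> k <= r).

(* Edge series-parallel digraphs, built from composition terms.  The digraph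
   of a term has vertices 0 .. sp_n t - 1, source 0 and sink 1. *)
Inductive sp_term := SPArc | SPPar of sp_term & sp_term | SPSer of sp_term & sp_term.

Fixpoint sp_n (t : sp_term) : nat :=
  match t with
  | SPArc => 2
  | SPPar a b => sp_n a + sp_n b - 2
  | SPSer a b => sp_n a + sp_n b - 1
  end.

Definition relab (f : nat -> nat) (e : nat * nat) := (f e.1, f e.2).

(* parallel: b's source/sink identified with 0/1; b's inner vertex k -> k + na - 2 *)
Definition par_relab_b (na : nat) (k : nat) :=
  if k < 2 then k else k + na - 2.
(* series: a's sink (1) and b's source (0) become the middle vertex na;
   a's inner vertices keep their labels, b's sink becomes 1,
   b's inner vertex k becomes k + na - 1. *)
Definition ser_relab_a (na : nat) (k : nat) :=
  if k == 1 then na else k.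
Definition ser_relab_b (na : nat) (k : nat) :=
  if k == 0 then na else if k == 1 then 1 else k + na - 1.

Fixpoint sp_arcs (t : sp_term) : seq (nat * nat) :=
  match t with
  | SPArc => [:: (0, 1)]
  | SPPar a b => sp_arcs a ++ map (relab (par_relab_b (sp_n a))) (sp_arcs b)
  | SPSer a b => map (relab (ser_relab_a (sp_n a))) (sp_arcs a)
                  ++ map (relab (ser_relab_b (sp_n a))) (sp_arcs b)
  end.

(* A digraph (V, E) is an esp-digraph iff it is isomorphic (as a multidigraph)
   to the digraph of some composition term. *)
Definition is_esp (V : finType) (E : seq (V * V)) : Prop :=
  exists (t : sp_term) (f : V -> 'I_(sp_n t)),
    bijective f /\
    perm_eq (map (fun e => (val (f e.1), val (f e.2))) E) (sp_arcs t).

(* The digraph G of the theorem; v_i is represented by i-1 : 'I_7. *)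
Definition vG (i : nat) : 'I_7 := inord i.-1.
Definition G_arcs : seq ('I_7 * 'I_7) :=
  [:: (vG 1, vG 4); (vG 1, vG 2); (vG 2, vG 4); (vG 2, vG 3); (vG 3, vG 4);
      (vG 4, vG 6); (vG 4, vG 5); (vG 5, vG 6); (vG 6, vG 7); (vG 4, vG 7)].

(* Main.v *)
Require Import Defs.
From mathcomp Require Import all_boot.

Definition tX := SPPar SPArc (SPSer SPArc (SPPar SPArc (SPSer SPArc SPArc))).
Definition tY := SPPar SPArc (SPSer (SPPar SPArc (SPSer SPArc SPArc)) SPArc).
Definition tG := SPSer tX tY.

Definition fmap (k : nat) : nat := nth 0 [:: 0; 2; 3; 4; 5; 6; 1] k.
Definition gmap (k : nat) : nat := nth 0 [:: 0; 6; 1; 2; 3; 4; 5] k.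
Definition fG (i : 'I_7) : 'I_(sp_n tG) := inord (fmap i).
Definition gG (i : 'I_(sp_n tG)) : 'I_7 := inord (gmap i).

Lemma esp_part : is_esp G_arcs.
Proof.
exists tG, fG; split.
  exists gG.
    by move=> [[|[|[|[|[|[|[|k]]]]]]] Hk] //; apply/val_inj; rewrite /gG /fG /= ?inordK.
  move=> i; case: i; change (sp_n tG) with 7.
  by move=> [|[|[|[|[|[|[|k]]]]]]] Hk //; apply/val_inj; rewrite /gG /fG /= ?inordK.
rewrite /G_arcs /= /fG /vG /=. by rewrite !inordK //=.
Qed.

Definition oG (k : nat) (H : k < 7) : 'I_7 := Ordinal H.
Lemma Garcs_eq : G_arcs =
  [:: (@oG 0 isT, @oG 3 isT); (@oG 0 isT, @oG 1 isT); (@oG 1 isT, @oG 3 isT);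
      (@oG 1 isT, @oG 2 isT); (@oG 2 isT, @oG 3 isT); (@oG 3 isT, @oG 5 isT);
      (@oG 3 isT, @oG 4 isT); (@oG 4 isT, @oG 5 isT); (@oG 5 isT, @oG 6 isT);
      (@oG 3 isT, @oG 6 isT)].
Proof.
have E k (H : k < 7) : inord k = @oG k H by apply/val_inj; rewrite /= inordK.
rewrite /G_arcs /vG /=.
by rewrite (E 0 isT) (E 1 isT) (E 2 isT) (E 3 isT) (E 4 isT) (E 5 isT) (E 6 isT).
Qed.

Lemma col7 : has_oriented_coloring G_arcs 7.
Proof.
exists id; rewrite Garcs_eq; split.
  by move=> [[|[|[|[|[|[|[|kU]]]]]]] HU] [[|[|[|[|[|[|[|kV]]]]]]] HV].
move=> u v x y Hu Hx Evx; subst x; move: Hu Hx.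
by case: u => [[|[|[|[|[|[|[|kU]]]]]]] HU]; case: v => [[|[|[|[|[|[|[|kV]]]]]]] HV]; case: y => [[|[|[|[|[|[|[|kY]]]]]]] HY].
Qed.

Ltac try_m H2 m := apply: (H2 _ m m _); [ | | reflexivity]; rewrite Garcs_eq; done.

Lemma lower r : has_oriented_coloring G_arcs r -> 7 <= r.
Proof.
case=> c [H1 H2].
have inj : injective c.
  move=> [[|[|[|[|[|[|[|kI]]]]]]] HI] [[|[|[|[|[|[|[|kJ]]]]]]] HJ] Eij;
  first [ by apply/val_inj
        | exfalso; move/eqP: Eij; apply/negP;
          first [ by apply: H1; rewrite Garcs_eq
                | by rewrite eq_sym; apply: H1; rewrite Garcs_eq
                | try_m H2 (@oG 0 isT) | try_m H2 (@oG 1 isT) | try_m H2 (@oG 2 isT)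
                | try_m H2 (@oG 3 isT) | try_m H2 (@oG 4 isT) | try_m H2 (@oG 5 isT)
                | try_m H2 (@oG 6 isT)
                | rewrite eq_sym;
                  first [ try_m H2 (@oG 0 isT) | try_m H2 (@oG 1 isT) | try_m H2 (@oG 2 isT)
                | try_m H2 (@oG 3 isT) | try_m H2 (@oG 4 isT) | try_m H2 (@oG 5 isT)
                | try_m H2 (@oG 6 isT) ] ] ].
have := leq_card c inj.
by rewrite !card_ord.
Qed.

Theorem mainTheorem2 :
  is_esp G_arcs /\ oriented_chromatic_number_is G_arcs 7.
Proof.
split; first exact: esp_part.
split; first exact: col7.
exact: lower.
Qed.
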